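(* Let $m>a\geq0$, $n>b\geq0$ be integers. If there exists a regular erasure pattern $\mathcal{E}\subseteq[m]\times[n]$ that is not correctable in $T_{m\times n}(a,b,0)$, then for any non-negative integers $\delta,\gamma$ there exists a regular erasure pattern $\mathcal{E}'\subseteq[m+\delta]\times[n+\gamma]$ that is not correctable in $T_{(m+\delta)\times(n+\gamma)}(a+\delta,b+\gamma,0)$.
   Context: Positions of vectors in $\mathbb{F}^{mn}$ are identified with $[m]\times[n]$, $[k]=\{1,\dots,k\}$. For linear codes $\mathcal{C}_1\subseteq\mathbb{F}^m,\mathcal{C}_2\subseteq\mathbb{F}^n$, $\mathcal{C}_1\otimes\mathcal{C}_2$ is the row span of the Kronecker product of their generator matrices. A code for the topology $T_{m\times n}(a,b,0)$ is a linear code over a finite field $\mathbb{F}$ whose parity-check matrix is a parity-check matrix of $\mathcal{C}_{\mathsf{col}}\otimes\mathcal{C}_{\mathsf{row}}$, where $\mathcal{C}_{\mathsf{col}}$ is a linear $[m,\geq m-a]$ code and $\mathcal{C}_{\mathsf{row}}$ a linear $[n,\geq n-b]$ code over $\mathbb{F}$; $\mathbb{C}_{m\times n}(a,b,0)$ is the set of these codes (over any finite field). A code corrects an erasure pattern $\mathcal{E}$ if no two distinct codewords agree on all positions outside $\mathcal{E}$; $\mathcal{E}$ is correctable in $T_{m\times n}(a,b,0)$ if some code in $\mathbb{C}_{m\times n}(a,b,0)$ corrects it. An erasure pattern $\mathcal{E}\subseteq[m]\times[n]$ is regular (for $T_{m\times n}(a,b,0)$) if for all $\mathcal{U}\subseteq[m]$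 with $|\mathcal{U}|=u\geq a$ and all $\mathcal{V}\subseteq[n]$ with $|\mathcal{V}|=v\geq b$ one has $|\mathcal{E}\cap(\mathcal{U}\times\mathcal{V})|\leq va+ub-ab$. *)

(* Defs.v *)
From HB Require Import structures.
From mathcomp Require Import all_boot all_order all_algebra all_field.
Set Implicit Arguments. Unset Strict Implicit. Unset Printing Implicit Defensive.
Import GRing.Theory.
Local Open Scope ring_scope.

(* Codewords of a code in F^{mn} are represented as m x n matrices, position
   (i,j) in [m] x [n].  For generator matrices G1 (of C_col, length m) and
   G2 (of C_row, length n), the rows of the Kronecker product G1 (x) G2 are the
   outer products g1^T g2, so C_col (x) C_row = { G1^T M G2 }. *)
Definition tensor_code (F : fieldType) (m n k1 k2 : nat)
  (G1 : 'M[F]_(k1, m)) (G2 : 'M[F]_(k2, n)) (X : 'M[F]_(m, n)) : Prop :=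
  exists M : 'M[F]_(k1, k2), X = G1^T *m M *m G2.

Definition corrects (F : fieldType) (m n : nat) (C : 'M[F]_(m, n) -> Prop)
  (E : {set 'I_m * 'I_n}) : Prop :=
  forall X Y, C X -> C Y ->
    (forall (i : 'I_m) (j : 'I_n), (i, j) \notin E -> X i j = Y i j) -> X = Y.

Definition correctable (m n a b : nat) (E : {set 'I_m * 'I_n}) : Prop :=
  exists (F : finFieldType) (k1 k2 : nat)
         (G1 : 'M[F]_(k1, m)) (G2 : 'M[F]_(k2, n)),
    [/\ (m - a <= \rank G1)%N, (n - b <= \rank G2)%N
      & corrects (tensor_code G1 G2) E].

(* Regular erasure pattern.  Note: u >= a so u*b >= a*b and the truncated
   subtraction below is exact. *)
Definition regular (m n a b : nat) (E : {set 'I_m * 'I_n}) : Prop :=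
  forall (U : {set 'I_m}) (V : {set 'I_n}),
    (a <= #|U|)%N -> (b <= #|V|)%N ->
    (#|E :&: setX U V| <= #|V| * a + #|U| * b - a * b)%N.

(* Main.v *)
Require Import Defs.
From HB Require Import structures.
From mathcomp Require Import all_boot all_order all_algebra all_field.
From mathcomp Require Import zify.
Set Implicit Arguments. Unset Strict Implicit. Unset Printing Implicit Defensive.

Definition Eext m n d g (E : {set 'I_m * 'I_n}) : {set 'I_(m + d) * 'I_(n + g)} :=
  [set p | match split p.1, split p.2 with inl i, inl j => (i, j) \in E | _, _ => true end].

Lemma split_l m d (i : 'I_m) : split (lshift d i) = inl i.
Proof.
case: (split_ordP (lshift d i)) => [j /lshift_inj -> // | k /eqP]; by rewrite eq_lrshift.
Qed.

Lemma Eext_l m n d g (E : {set 'I_m * 'I_n}) i j :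
  ((lshift d i, lshift g j) \in Eext d g E) = ((i, j) \in E).
Proof. by rewrite inE /= !split_l. Qed.

Lemma Eext_notin m n d g (E : {set 'I_m * 'I_n}) (x : 'I_(m+d)) (y : 'I_(n+g)) :
  (x, y) \notin Eext d g E ->
  exists i j, [/\ x = lshift d i, y = lshift g j & (i, j) \notin E].
Proof.
rewrite inE /=; case: (split_ordP x) => [i -> | k _]; case: (split_ordP y) => [j -> | l _] //.
by move=> H; exists i, j.
Qed.

Lemma card_low m d (U' : {set 'I_(m + d)}) :
  (#|[set i | lshift d i \in U']| <= #|U'| <= #|[set i | lshift d i \in U']| + d)%N.
Proof.
set U := [set i | lshift d i \in U'].
have cL : #|[set lshift d i | i in U]| = #|U| by rewrite card_imset //; exact: lshift_inj.
have sL : [set lshift d i | i in U] \subset U'.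
  by apply/subsetP => x /imsetP [i]; rewrite inE => Hi ->.
apply/andP; split; first by rewrite -cL subset_leq_card.
have sU : U' \subset [set lshift d i | i in U] :|: [set rshift m k | k in 'I_d].
  apply/subsetP => x Hx; rewrite inE; case: (split_ordP x) => [i Ei | k Ek].
    by apply/orP; left; apply/imsetP; exists i; rewrite // inE -Ei.
  by apply/orP; right; apply/imsetP; exists k.
apply: (leq_trans (subset_leq_card sU)); apply: (leq_trans (leq_card_setU _ _)).
by rewrite cL leq_add2l; apply: (leq_trans (leq_imset_card _ _)); rewrite card_ord.
Qed.

Lemma Eext_regular m n a b d g (E : {set 'I_m * 'I_n}) :
  regular a b E -> regular (a + d) (b + g) (Eext d g E).
Proof.
move=> HE U' V' HU HV.
have /andP[u1 u2] := card_low U'; have /andP[v1 v2] := card_low V'.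
set U := [set i | lshift d i \in U'] in u1 u2 *.
set V := [set j | lshift g j \in V'] in v1 v2 *.
set LU := [set lshift d i | i in U]; set LV := [set lshift g j | j in V].
have cLU : #|LU| = #|U| by rewrite card_imset //; exact: lshift_inj.
have cLV : #|LV| = #|V| by rewrite card_imset //; exact: lshift_inj.
have sLU : LU \subset U' by apply/subsetP => x /imsetP [i]; rewrite inE => Hi ->.
have sLV : LV \subset V' by apply/subsetP => x /imsetP [i]; rewrite inE => Hi ->.
pose f := fun p : 'I_m * 'I_n => (lshift d p.1, lshift g p.2).
have sub : Eext d g E :&: setX U' V' \subset
   f @: (E :&: setX U V) :|: (setX U' V' :\: setX LU LV).
  apply/subsetP => [[x y]]; rewrite !inE /= => /andP [HxyE /andP [Hx Hy]].
  case Hl: ((x \in LU) && (y \in LV)); last by rewrite Hx Hy orbT.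
  move/andP: Hl => [/imsetP [i Hi Ex] /imsetP [j Hj Ey]]; subst x y.
  apply/orP; left; apply/imsetP; exists (i, j) => //.
  by rewrite !split_l in HxyE; rewrite inE HxyE /= in_setX Hi Hj.
have key : (#|Eext d g E :&: setX U' V'| <=
    #|E :&: setX U V| + (#|U'| * #|V'| - #|U| * #|V|))%N.
  apply: (leq_trans (subset_leq_card sub)); apply: (leq_trans (leq_card_setU _ _)).
  apply: leq_add; first exact: leq_imset_card.
  rewrite cardsD (setIidPr _) ?setXS // !cardsX cLU cLV //.
have hu : (a <= #|U|)%N by lia.
have hv : (b <= #|V|)%N by lia.
have HEr : (#|E :&: setX U V| <= #|V| * a + #|U| * b - a * b)%N := HE U V hu hv.
have Hp : ((#|U'| - (a + d)) * (#|V'| - (b + g)) <= (#|U| - a) * (#|V| - b))%N.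
  by apply: leq_mul; lia.
move: key HEr Hp; set e' := #|_ :&: _|; set e := #|_ :&: _|.
move: (#|U|) (#|V|) (#|U'|) (#|V'|) u1 u2 v1 v2 HU HV => u v u' v' u1 u2 v1 v2 HU HV.
have [p E_p] : exists p, u' = u + p by exists (u' - u); lia. subst u'.
have [q E_q] : exists q, v' = v + q by exists (v' - v); lia. subst v'.
have [s' E_s_] : exists s', d = p + s' by exists (d - p); lia. subst d.
have [t E_t] : exists t, g = q + t by exists (g - q); lia. subst g.
have [x E_x] : exists x, u = a + s' + x by exists (u - (a + s')); lia. subst u.
have [y E_y] : exists y, v = b + t + y by exists (v - (b + t)); lia. subst v.
move=> H1 H2 H3.
have E1 : ((a + s' + x + p) - (a + (p + s')) = x)%N by lia.
have E2 : ((b + t + y + q) - (b + (q + t)) = y)%N by lia.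
have E3 : ((a + s' + x) - a = s' + x)%N by lia.
have E4 : ((b + t + y) - b = t + y)%N by lia.
rewrite E1 E2 E3 E4 in H3.
set A := (a + (p + s')); set B := (b + (q + t)).
set U1 := (a + s' + x + p); set V1 := (b + t + y + q).
set U0 := (a + s' + x); set V0 := (b + t + y).
have K1 : (U0 * V0 <= U1 * V1)%N by apply: leq_mul; lia.
have K2 : (a * b <= U0 * b)%N by apply: leq_mul; lia.
have K3 : (A * B <= U1 * B)%N by apply: leq_mul; lia.
have H1' : (e' + U0 * V0 <= e + U1 * V1)%N by lia.
have H2' : (e + a * b <= V0 * a + U0 * b)%N by lia.
suff : (e' + A * B <= V1 * A + U1 * B)%N by lia.
have P : (x * y <= (s' + x) * (t + y))%N by apply: leq_mul; lia.
rewrite /A /B /U1 /V1 /U0 /V0 in H1' H2' H3 *.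
clear -P H1' H2'. move: P H1' H2'. rewrite !mulnDl !mulnDr. lia.
Qed.

Import GRing.Theory.
Local Open Scope ring_scope.

Definition Pm (m d : nat) (F : fieldType) : 'M[F]_(m + d, m) :=
  \matrix_(i, j) (i == lshift d j)%:R.

Lemma mulPm (F : fieldType) k m d (A : 'M[F]_(k, m + d)) r j :
  (A *m Pm m d F) r j = A r (lshift d j).
Proof.
rewrite !mxE (bigD1 (lshift d j)) //= big1 ?addr0 ?mxE ?eqxx ?mulr1 //.
by move=> i /negbTE Hi; rewrite mxE Hi mulr0.
Qed.

Lemma mulPmT (F : fieldType) k m d (A : 'M[F]_(m + d, k)) i c :
  ((Pm m d F)^T *m A) i c = A (lshift d i) c.
Proof.
have -> : (Pm m d F)^T *m A = (A^T *m Pm m d F)^T by rewrite trmx_mul trmxK.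
by rewrite mxE mulPm mxE.
Qed.

Lemma rank_drop (F : fieldType) k p q (A : 'M[F]_(k, p)) (B : 'M[F]_(p, q)) :
  (\rank (A *m B) < \rank A)%N ->
  exists K : 'M[F]_(k, k), K *m A *m B = 0 /\ K *m A != 0.
Proof.
move=> Hr; exists (kermx (A *m B)); split.
  by apply/eqP; rewrite -mulmxA -sub_kermx submx_refl.
apply/negP => /eqP H0.
have : (kermx (A *m B) <= kermx A)%MS by rewrite sub_kermx H0.
move/mxrankS; rewrite !mxrank_ker.
have := rank_leq_row A; have := rank_leq_row (A *m B). lia.
Qed.

Lemma outer_entry (F : fieldType) k1 k2 m n (A : 'M[F]_(k1, m)) (B : 'M[F]_(k2, n))
  (L : 'M[F]_(k1, k1)) (R : 'M[F]_(k2, k2)) r s i j :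
  (A^T *m (L^T *m delta_mx r s *m R) *m B) i j = (L *m A) r i * (R *m B) s j.
Proof.
have -> : A^T *m (L^T *m delta_mx r s *m R) *m B
   = (A^T *m L^T *m delta_mx r (0 : 'I_1)) *m (delta_mx 0 s *m (R *m B)).
  rewrite -[delta_mx r s](mul_delta_mx (0 : 'I_1)).
  by rewrite !mulmxA.
rewrite -colE -rowE -trmx_mul -tr_row mxE big_ord1 !mxE.
done.
Qed.

Lemma mx_nz (F : fieldType) k p (A : 'M[F]_(k, p)) : A != 0 -> exists r c, A r c != 0.
Proof.
move=> HA; case: (pickP (fun rc : 'I_k * 'I_p => A rc.1 rc.2 != 0)) => [[r c] H|H].
  by exists r, c.
case/negP: HA; apply/eqP/matrixP => i j; rewrite mxE.
by have := H (i, j) => /= /negbFE/eqP.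
Qed.
Lemma codeword0 (F : fieldType) k1 k2 m n (G1 : 'M[F]_(k1, m)) (G2 : 'M[F]_(k2, n)) :
  tensor_code G1 G2 0.
Proof. by exists 0; rewrite mulmx0 mul0mx. Qed.

Lemma nz_of_rank (F : fieldType) k p (A : 'M[F]_(k, p)) : (0 < \rank A)%N -> A != 0.
Proof. by apply: contraTneq => ->; rewrite mxrank0. Qed.

Theorem lemma7 (m n a b : nat) :
  (a < m)%N -> (b < n)%N ->
  (exists E : {set 'I_m * 'I_n}, regular a b E /\ ~ correctable a b E) ->
  forall delta gamma : nat,
    exists E' : {set 'I_(m + delta) * 'I_(n + gamma)},
      regular (a + delta) (b + gamma) E' /\
      ~ correctable (a + delta) (b + gamma) E'.
Proof.
move=> Ham Hbn [E [HEr HEnc]] d g.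
exists (Eext d g E); split; first exact: Eext_regular.
case=> F [k1 [k2 [G1 [G2 [r1 r2 Hc]]]]].
have G1nz : G1 != 0 by apply: nz_of_rank; lia.
have G2nz : G2 != 0 by apply: nz_of_rank; lia.
have [[c1 [c2 Hc12]] [s1 [s2 Hs12]]] : (exists r c, G1 r c != 0) /\ (exists r c, G2 r c != 0).
  by split; apply: mx_nz.
have Z : forall X, tensor_code G1 G2 X ->
    (forall i j, (lshift d i, lshift g j) \notin Eext d g E -> X (lshift d i) (lshift g j) = 0) ->
    X = 0.
  move=> X HX H0; apply: (Hc X 0 HX (codeword0 _ _)) => x y Hxy.
  have [i [j [Ex Ey Hij]]] := Eext_notin Hxy; subst x y.
  by rewrite mxE H0 // Eext_l.
case: (leqP (m - a) (\rank (G1 *m Pm m d F))) => HA; last first.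
  have HK : (\rank (G1 *m Pm m d F) < \rank G1)%N by lia.
  have [K [HK1 HK2]] := rank_drop HK.
  have [r [c Hrc]] := mx_nz HK2.
  pose X := G1^T *m (K^T *m delta_mx r s1 *m 1) *m G2.
  have HX : X = 0.
    apply: Z; first by exists (K^T *m delta_mx r s1 *m 1).
    move=> i j _; rewrite /X outer_entry -mulPm HK1 mxE mul0r //.
  have := congr1 (fun M : 'M_(_, _) => M c s2) HX.
  rewrite /X outer_entry mul1mx => H; move: (mulf_neq0 Hrc Hs12); by rewrite H mxE eqxx.
case: (leqP (n - b) (\rank (G2 *m Pm n g F))) => HB; last first.
  have HK : (\rank (G2 *m Pm n g F) < \rank G2)%N by lia.
  have [K [HK1 HK2]] := rank_drop HK.
  have [r [c Hrc]] := mx_nz HK2.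
  pose X := G1^T *m (1^T *m delta_mx c1 r *m K) *m G2.
  have HX : X = 0.
    apply: Z; first by exists (1^T *m delta_mx c1 r *m K).
    move=> i j _; rewrite /X outer_entry -(mulPm (K *m G2)) HK1 [X in _ * X]mxE mulr0 //.
  have := congr1 (fun M : 'M_(_, _) => M c2 c) HX.
  rewrite /X outer_entry mul1mx => H; move: (mulf_neq0 Hc12 Hrc); by rewrite H mxE eqxx.
apply: HEnc; exists F, k1, k2, (G1 *m Pm m d F), (G2 *m Pm n g F); split => //.
move=> X Y [M ->] [N ->] Hag.
have T : forall M0 : 'M[F]_(k1, k2), (G1 *m Pm m d F)^T *m M0 *m (G2 *m Pm n g F)
   = (Pm m d F)^T *m (G1^T *m M0 *m G2) *m Pm n g F.
  by move=> M0; rewrite trmx_mul !mulmxA.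
have Ent : forall (M0 : 'M[F]_(m + d, n + g)) i j,
   ((Pm m d F)^T *m M0 *m Pm n g F) i j = M0 (lshift d i) (lshift g j).
  by move=> M0 i j; rewrite mulPm mulPmT.
rewrite !T; congr (_ *m _ *m _).
apply: (Hc _ _ (ex_intro _ M erefl) (ex_intro _ N erefl)) => x y Hxy.
have [i [j [Ex Ey Hij]]] := Eext_notin Hxy; subst x y.
by rewrite -!Ent -!T; apply: Hag.
Qed.
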